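(* Let $k_0<0$, $0<L\leq\pi$, let $D\subset(0,L)$ be a set of full Lebesgue measure, and let $w:D\to\mathbb{R}$ satisfy: (i) $w$ is strictly decreasing on $D$: for $t_1,t_2\in D$ with $t_1<t_2$, $w(t_1)>w(t_2)$; (ii) for every $t_0\in D$, $\limsup_{D\ni t\to t_0^+}\frac{w(t)-w(t_0)}{t-t_0}\leq-1-(w(t_0))^2$; (iii) $w(t)\leq\frac{\sqrt{-k_0}\cosh(\sqrt{-k_0}t)}{\sinh(\sqrt{-k_0}t)}$ for $t\in D$ close to $0$. Then $w(t)\leq\cot t$ for every $t\in D$. *)

(* Defs.v *)
From HB Require Import structures.
From mathcomp Require Import all_boot all_order all_algebra.
From mathcomp Require Import all_classical all_reals all_analysis.
Set Implicit Arguments. Unset Strict Implicit. Unset Printing Implicit Defensive.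
Import Order.TTheory GRing.Theory Num.Theory.
Import numFieldNormedType.Exports.
Local Open Scope classical_set_scope.
Local Open Scope ring_scope.

Definition coshR {R : realType} (x : R) : R := (expR x + expR (- x)) / 2.
Definition sinhR {R : realType} (x : R) : R := (expR x - expR (- x)) / 2.
Definition cotR {R : realType} (x : R) : R := cos x / sin x.

Definition right_upper_dini {R : realType} (D : set R) (w : R -> R) (t0 : R)
  : \bar R :=
  limf_esup (fun t : R => ((w t - w t0) / (t - t0))%:E) (within D t0^'+).

(* Main.v *)
Require Import Defs.
From HB Require Import structures.
From mathcomp Require Import all_boot all_order all_algebra.
From mathcomp Require Import all_classical all_reals all_analysis.
From mathcomp Require Import ring lra.
Import Order.TTheory GRing.Theory Num.Theory.
Import numFieldNormedType.Exports.
Local Open Scope classical_set_scope.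
Local Open Scope ring_scope.

Lemma dini_near {R : realType} (D : set R) (w : R -> R) t0 (M : R) :
  (right_upper_dini D w t0 < M%:E)%E ->
  exists2 r : R, 0 < r & forall t, D t -> t0 < t -> t < t0 + r ->
     (w t - w t0) / (t - t0) < M.
Proof.
rewrite /right_upper_dini limf_esupE => /ereal_inf_lt[_ [V VF <-] VM].
move: VF; rewrite /within /= nearE => /nbhs_ballP[e e0 He].
exists e => // t Dt t0t tt0.
have Vt : V t.
  apply: (He t) => //.
  by rewrite /ball /= ltr0_norm ?subr_lt0 // opprB ltrBlDl.
rewrite -lte_fin; apply: le_lt_trans VM.
by apply: ereal_sup_ubound; exists t.
Qed.

Lemma dense_full {R : realType} (L : R) (D : set R) :
  (@lebesgue_measure R).-negligible (`]0, L[ `\` D) ->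
  forall x y, 0 <= x -> x < y -> y <= L -> exists z, [/\ D z, x < z & z < y].
Proof.
move=> [A [mA A0 NA]] x y x0 xy yL.
apply: contrapT => Hn.
have sub : `]x, y[ `<=` A.
  move=> z /=; rewrite in_itv /= => /andP[xz zy]; apply: NA; split.
    by rewrite /= in_itv /= (le_lt_trans x0 xz) (lt_le_trans zy yL).
  by move=> Dz; apply: Hn; exists z.
have H : (lebesgue_measure (`]x, y[ : set R) <= lebesgue_measure A)%E.
  by rewrite le_measure // inE //; exact: measurable_itv.
move: H; rewrite A0 lebesgue_measure_itv /= lte_fin xy -EFinD lee_fin subr_le0.
by rewrite leNgt xy.
Qed.

Lemma small_open {R : realType} (N : set R) (eps : R) :
  (@lebesgue_measure R).-negligible N -> 0 < eps ->
  exists U : set R, [/\ open U, N `<=` U & (lebesgue_measure U < eps%:E)%E].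
Proof.
move=> [A [mA A0 NA]] e0.
have [|U [oU AU UAe]] := lebesgue_regularity_outer mA _ e0.
  by move: A0; rewrite /= => ->; rewrite ltry.
exists U; split => //; first exact: subset_trans AU.
have mU : measurable U by exact: measurable_realfun.open_measurable.
have := @measureDI _ _ _ (@lebesgue_measure R) U A mU mA.
move=> ->.
have h : (lebesgue_measure (U `&` A) <= lebesgue_measure A)%E.
  rewrite le_measure // ?inE //; try exact: subIsetr; exact: measurableI mU mA.
have UA0 : lebesgue_measure (U `&` A) = 0%E.
  apply/eqP; rewrite eq_le measure_ge0 andbT.
  apply: (le_trans h); rewrite (_ : lebesgue_measure A = 0%E) //; exact: A0.
apply: le_lt_trans UAe; rewrite -[leRHS]adde0 leeD2l // le_eqVlt; apply/orP; left; apply/eqP; exact: UA0.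
Qed.

Lemma atan_quot {R : realType} (y c : R) : 0 < c ->
  exists2 r : R, 0 < r & forall h, h != 0 -> `|h| < r ->
    `|(1 + y ^+ 2)^-1 - h^-1 * (atan (y + h) - atan y)| < c.
Proof.
move=> c0.
have D := @ex_derive _ _ _ _ _ _ _ (is_derive1_atan y).
have V := @derive_val _ _ _ _ _ _ _ (is_derive1_atan y).
move: D; rewrite /derivable => /cvg_ex [l Hl].
have le : l = (1 + y ^+ 2)^-1.
  by rewrite -V /derive (cvg_lim _ Hl).
move: Hl; rewrite le => /cvgrPdist_lt /(_ c c0).
rewrite /dnbhs /within /= nearE => /nbhs_ballP[r r0 Hr].
exists r => // h h0 hr.
have := Hr h; rewrite /ball /= sub0r normrN => /(_ hr h0).
by rewrite /= => H; move: H; rewrite -[h%:A]/(h * 1) mulr1 (addrC h y).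
Qed.

Lemma atan_step {R : realType} (y e : R) : 0 < e -> e < 1 ->
  exists2 r : R, 0 < r & forall s x, 0 < s -> s < r ->
    x <= y - (1 - e / 2) * (1 + y ^+ 2) * s -> atan x - atan y <= - (1 - e) * s.
Proof.
move=> e0 e1.
set d := (1 + y ^+ 2)^-1.
have y2 : 0 < 1 + y ^+ 2 by rewrite ltr_pwDl // sqr_ge0.
have d0 : 0 < d by rewrite invr_gt0.
have Pd : (1 + y ^+ 2) * d = 1 by rewrite mulfV // gt_eqF.
have c0 : 0 < d * e / 2 by rewrite divr_gt0 // mulr_gt0.
have [r r0 Hr] := @atan_quot R y (d * e / 2) c0.
set P := (1 - e / 2) * (1 + y ^+ 2).
have P0 : 0 < P by rewrite mulr_gt0 //; lra.
exists (r / P); first by rewrite divr_gt0.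
move=> s x s0 sr xle.
set h := - (P * s).
have h0 : h < 0 by rewrite oppr_lt0 mulr_gt0.
have hr : `|h| < r.
  by rewrite ltr0_norm // opprK -ltr_pdivlMl // mulrC.
have := Hr h (ltr0_neq0 h0) hr. rewrite -/d ltr_distlC => /andP[q1 _].
set q := h^-1 * _ in q1.
have E : atan (y + h) - atan y = h * q by rewrite /q mulVKf // ltr0_neq0.
have ax : atan x <= atan (y + h) by apply: le_atan; rewrite /h.
have E2 : h * (d - d * e / 2) = - ((1 - e / 2) ^+ 2) * s.
  rewrite /h /P; transitivity (- ((1 - e / 2) ^+ 2 * ((1 + y ^+ 2) * d) * s)).
    by ring.
  by rewrite Pd mulr1 mulNr.
have hq : h * q <= h * (d - d * e / 2) by nra.
nra.
Qed.

Section mm.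
Context {R : realType} (U : set R) (del : R).
Hypothesis oU : open U.
Hypothesis muU : (lebesgue_measure U < del%:E)%E.

Let mU : measurable U := measurable_realfun.open_measurable oU.

Definition mm (t : R) : R := fine (lebesgue_measure (U `&` `]-oo, t])).

Lemma mm_fin t : lebesgue_measure (U `&` `]-oo, t]) \is a fin_num.
Proof.
rewrite ge0_fin_numE ?measure_ge0 //.
apply: le_lt_trans (lt_le_trans muU (leey _)).
rewrite le_measure // ?inE //; try exact: subIsetl.
by apply: measurableI => //; exact: measurable_itv.
Qed.

Lemma mm_ge0 t : 0 <= mm t.
Proof. by rewrite /mm fine_ge0 // measure_ge0. Qed.

Lemma mm_le t : mm t <= del.
Proof.
rewrite /mm -lee_fin fineK ?mm_fin //.
apply: ltW; apply: le_lt_trans muU.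
rewrite le_measure // ?inE //; try exact: subIsetl.
by apply: measurableI => //; exact: measurable_itv.
Qed.

Lemma mm_split s t : s <= t ->
  mm t = mm s + fine (lebesgue_measure (U `&` `]s, t])).
Proof.
move=> st.
have E : U `&` `]-oo, t] = (U `&` `]-oo, s]) `|` (U `&` `]s, t]).
  rewrite -setIUr; congr (U `&` _).
  apply/seteqP; split => x /=; rewrite !in_itv /=.
    by move=> xt; case: (leP x s) => xs; [left|right; rewrite xt].
  by case=> [xs|/andP[_ ->]] //; exact: le_trans xs st.
have fin2 : lebesgue_measure (U `&` `]s, t]) \is a fin_num.
  rewrite ge0_fin_numE ?measure_ge0 //.
  apply: le_lt_trans (lt_le_trans muU (leey _)).
  rewrite le_measure // ?inE //; try exact: subIsetl.
  by apply: measurableI => //; exact: measurable_itv.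
rewrite /mm E measureU //.
- by rewrite fineD // mm_fin.
- by apply: measurableI => //; exact: measurable_itv.
- by apply: measurableI => //; exact: measurable_itv.
- apply/seteqP; split => x //= [[_ +] [_]]; rewrite !in_itv /=.
  by move=> xs /andP[sx _]; move: (lt_le_trans sx xs); rewrite ltxx.
Qed.

Lemma mm_mono s t : s <= t -> mm s <= mm t.
Proof.
move=> st; rewrite (@mm_split s t st) lerDl fine_ge0 // measure_ge0.
Qed.

Lemma mm_itv s t : s <= t -> `]s, t] `<=` U -> mm t = mm s + (t - s).
Proof.
move=> st sU; rewrite (@mm_split s t st) setIidr // lebesgue_measure_itv /=.
case: ltP => [_|ts]; first by rewrite -EFinD.
have -> : t = s by apply/eqP; rewrite eq_le st andbT -lee_fin.
by rewrite subrr.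
Qed.
End mm.


Lemma creep_core {R : realType} (L : R) (D : set R) (f : R -> R) :
  D `<=` `]0, L[ -> (@lebesgue_measure R).-negligible (`]0, L[ `\` D) ->
  (forall s t, D s -> D t -> s < t -> f t <= f s) ->
  (forall t0 e : R, D t0 -> 0 < e -> e < 1 -> exists2 r : R, 0 < r &
     forall t, D t -> t0 < t -> t < t0 + r -> f t - f t0 <= - (1 - e) * (t - t0)) ->
  forall a b e del : R, D a -> D b -> a < b -> 0 < e -> e < 1 -> 0 < del ->
  f b + b <= f a + a + e * (b - a) + del.
Proof.
move=> DL negl fmono fdini a b e del Da Db ab e0 e1 del0.
have [U [oU NU muU]] := @small_open R _ del negl del0.
pose m := mm U.
have m0 t : 0 <= m t by exact: mm_ge0.
have mle t : m t <= del by exact: (@mm_le R U del oU muU t).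
have mmono s t : s <= t -> m s <= m t by exact: (@mm_mono R U del oU muU s t).
have mitv s t : s <= t -> `]s, t] `<=` U -> m t = m s + (t - s).
  by exact: (@mm_itv R U del oU muU s t).
pose g t := f t + (1 - e) * t - m t.
suff gb : g b <= g a.
  move: gb; rewrite /g => gb.
  have := m0 a; have := mle b; lra.
have [a0 aL] : 0 < a /\ a < L by move: (DL a Da); rewrite /= in_itv /= => /andP.
have [b0 bL] : 0 < b /\ b < L by move: (DL b Db); rewrite /= in_itv /= => /andP.
have dense := @dense_full R L D negl.
have key1 s t : D s -> D t -> s <= t -> g t <= g s + (t - s).
  move=> Ds Dt; rewrite le_eqVlt => /predU1P[->|st]; first lra.
  have := fmono s t Ds Dt st; have := mmono s t (ltW st); rewrite /g; nra.
pose S := [set t | [/\ D t, a <= t, t <= b & g t <= g a]].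
have Sa : S a by split => //; exact: ltW ab.
have hS : has_sup S by split; [exists a | exists b => t [] ].
set c := sup S.
have ubS := sup_upper_bound hS.
have ac : a <= c by exact: ubS.
have cb : c <= b by apply: ge_sup; [exists a | move=> t []].
have noS t : S t -> c < t -> False.
  by move=> St ct; move: (ubS t St); rewrite leNgt ct.
have gc : D c -> g c <= g a.
  move=> Dc; apply/ler_addgt0Pr => eta eta0.
  have [s [Ds ass sb gs] cs] := sup_adherent eta0 hS; rewrite -/c in cs.
  have sc : s <= c by exact: ubS.
  have := key1 s c Ds Dc sc; lra.
case: (pselect (D c)) => Dc.
  case: (eqVneq c b) => [cbE|cbN]; first by rewrite -cbE; exact: gc.
  have cb' : c < b by rewrite lt_neqAle cbN cb.
  have [r r0 Hr] := fdini c e Dc e0 e1.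
  have h1 : c < Order.min (c + r) b by rewrite lt_min cb' ltrDl r0.
  have h2 : Order.min (c + r) b <= L by rewrite ge_min (ltW bL) orbT.
  have [t [Dt ct tm]] := dense c (Order.min (c + r) b) (le_trans (ltW a0) ac) h1 h2.
  move: tm; rewrite lt_min => /andP[tcr tb].
  exfalso; apply: (noS t _ ct); split => //; [exact: le_trans ac (ltW ct)|exact: ltW|].
  apply: le_trans (gc Dc).
  have := Hr t Dt ct tcr; have := mmono c t (ltW ct); rewrite /g; nra.
exfalso.
have Uc : U c.
  apply: NU; split => //=; rewrite in_itv /= (lt_le_trans a0 ac).
  exact: le_lt_trans cb bL.
have := oU c Uc; rewrite nbhs_ballP => -[r r0 Hr].
have cb' : c < b by rewrite lt_neqAle cb andbT; apply/eqP => cbE; apply: Dc; rewrite cbE.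
have [s [Ds ass sb gs] cs] := sup_adherent r0 hS; rewrite -/c in cs.
have sc : s < c.
  have scle : s <= c by apply: ubS; split.
  rewrite lt_neqAle scle andbT.
  by apply/eqP => scE; apply: Dc; rewrite -scE.
have h1 : c < Order.min (c + r) b by rewrite lt_min cb' ltrDl r0.
have h2 : Order.min (c + r) b <= L by rewrite ge_min (ltW bL) orbT.
have [t [Dt ct tm]] := dense c (Order.min (c + r) b) (le_trans (ltW a0) ac) h1 h2.
move: tm; rewrite lt_min => /andP[tcr tb].
have st : s < t by exact: lt_trans ct.
have sU : `]s, t] `<=` U.
  move=> x /=; rewrite in_itv /= => /andP[sx xt]; apply: Hr.
  rewrite /ball /= /ball_ /=.
  rewrite ltr_norml; apply/andP; split; lra.
have mt := mitv s t (ltW st) sU.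
apply: (noS t _ ct); split => //; [exact: le_trans ac (ltW ct)|exact: ltW|].
apply: le_trans gs.
have := fmono s t Ds Dt st; rewrite /g mt; nra.
Qed.


Lemma lim_ed {R : realType} (x y c : R) : 0 < c ->
  (forall e del : R, 0 < e -> e < 1 -> 0 < del -> x <= y + e * c + del) -> x <= y.
Proof.
move=> c0 H; apply/ler_addgt0Pr => eta eta0.
have ce : 0 < 2 * (c + eta) by lra.
set e := eta / (2 * (c + eta)).
have eE : e * (2 * (c + eta)) = eta by rewrite /e divfK // gt_eqF.
have e0 : 0 < e by rewrite divr_gt0.
have e1 : e < 1 by nra.
have h2 : 0 < eta / 2 by lra.
have := H e (eta / 2) e0 e1 h2.
nra.
Qed.

Lemma cot_tan {R : realType} (t : R) : cotR t = tan (pi / 2 - t).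
Proof.
rewrite /cotR /tan (addrC (pi / 2)) sinDpihalf cosDpihalf cosN sinN opprK.
by [].
Qed.



Theorem mainTheorem12 (R : realType) (k0 L : R) (D : set R) (w : R -> R)
  (hk0 : k0 < 0) (hL0 : 0 < L) (hLpi : L <= pi)
  (hDsub : D `<=` `]0, L[)
  (hDfull : (@lebesgue_measure R).-negligible (`]0, L[ `\` D))
  (hdecr : forall t1 t2, D t1 -> D t2 -> t1 < t2 -> w t2 < w t1)
  (hdini : forall t0, D t0 ->
     (right_upper_dini D w t0 <= (- 1 - w t0 ^+ 2)%:E)%E)
  (hnear0 : exists2 delta : R, 0 < delta &
     forall t, D t -> t < delta ->
       w t <= Num.sqrt (- k0) * coshR (Num.sqrt (- k0) * t)
                / sinhR (Num.sqrt (- k0) * t)) :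
  forall t, D t -> w t <= cotR t.
Proof.
move=> t Dt.
pose f x := atan (w x).
have fmono s u : D s -> D u -> s < u -> f u <= f s.
  by move=> Ds Du su; apply: le_atan; apply: ltW; exact: hdecr.
have fdini t0 e : D t0 -> 0 < e -> e < 1 -> exists2 r : R, 0 < r &
     forall u, D u -> t0 < u -> u < t0 + r -> f u - f t0 <= - (1 - e) * (u - t0).
  move=> Dt0 e0 e1.
  set M := - (1 - e / 2) * (1 + w t0 ^+ 2).
  have y2 : 0 < 1 + w t0 ^+ 2 by rewrite ltr_pwDl // sqr_ge0.
  have hM : (right_upper_dini D w t0 < M%:E)%E.
    apply: le_lt_trans (hdini t0 Dt0) _; rewrite lte_fin /M; nra.
  have [r1 r10 H1] := @dini_near R D w t0 M hM.
  have [r2 r20 H2] := @atan_step R (w t0) e e0 e1.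
  exists (Order.min r1 r2); first by rewrite lt_min r10 r20.
  move=> u Du tu um.
  have ur1 : u < t0 + r1 by apply: (lt_le_trans um); rewrite lerD2l ge_min lexx.
  have ur2 : u < t0 + r2 by apply: (lt_le_trans um); rewrite lerD2l ge_min lexx orbT.
  have su : 0 < u - t0 by rewrite subr_gt0.
  have h1 := H1 u Du tu ur1.
  rewrite ltr_pdivrMr // in h1.
  apply: H2 => //; first by lra.
  rewrite /M in h1; lra.
have [t0 tL] : 0 < t /\ t < L by move: (hDsub t Dt); rewrite /= in_itv /= => /andP.
have key s : D s -> s < t -> f t + t <= f s + s.
  move=> Ds st; apply: (@lim_ed R _ _ (t - s)); first by rewrite subr_gt0.
  move=> e del e0 e1 del0.
  exact: (@creep_core R L D f hDsub hDfull fmono fdini s t e del Ds Dt st e0 e1 del0).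
have ft : f t + t <= pi / 2.
  apply/ler_addgt0Pr => eta eta0.
  have h1 : 0 < Order.min t eta by rewrite lt_min t0 eta0.
  have h2 : Order.min t eta <= L by rewrite ge_min (ltW tL).
  have [s [Ds s0 sm]] := @dense_full R L D hDfull 0 (Order.min t eta) (lexx 0) h1 h2.
  move: sm; rewrite lt_min => /andP[st se].
  have := key s Ds st; have := atan_ltpi2 (w s); rewrite /f; lra.
rewrite cot_tan.
have yI : pi / 2 - t \in `](-(pi/2)), (pi/2)[.
  rewrite in_itv /=; apply/andP; split; last by lra.
  have := pi_gt0 R; lra.
rewrite leNgt; apply/negP => H.
have := lt_atan H; rewrite tanK //.
move: ft; rewrite /f; lra.
Qed.
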